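(* Let $Q$ be a countable weak-latin quandle and $<$ a right order on $Q$. Then there is an injective quandle homomorphism $\rho:Q\hookrightarrow\mathrm{Conj}(\mathrm{Homeo}_+(\mathbb{R}))$, i.e. an injective map with $\rho(r*s)=\rho(s)\circ\rho(r)\circ\rho(s)^{-1}$ for all $r,s\in Q$.
   Context: Quandle: set $Q$ with operation $*$ satisfying $q*q=q$, unique right division, and $(q*r)*s=(q*s)*(r*s)$. Weak-latin: for any $q,r\in Q$ there exists $\hat q\in Q$ such that $\hat q*q=\hat q*r$ implies $q=r$. A right order is a total order $<$ on $Q$ with $q_1<q_2\Rightarrow q_1*q<q_2*q$ for all $q$. Homeomorphisms act on the right; $\mathrm{Conj}(\mathrm{Homeo}_+(\mathbb{R}))$ is the quandle structure $f*g=g\circ f\circ g^{-1}$ on $\mathrm{Homeo}_+(\mathbb{R})$. *)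

(* Defs.v *)
From Stdlib Require Import Reals.
Open Scope R_scope.

Record quandle := Quandle {
  qcar :> Type;
  qop : qcar -> qcar -> qcar;
  qidem : forall q : qcar, qop q q = q;
  qrdiv : forall r q : qcar, exists! p : qcar, qop p r = q;
  qrdist : forall q r s : qcar, qop (qop q r) s = qop (qop q s) (qop r s)
}.

Definition weak_latin (Q : quandle) : Prop :=
  forall q r : Q, exists qh : Q, qop Q qh q = qop Q qh r -> q = r.

Definition countable (T : Type) : Prop :=
  exists f : T -> nat, forall x y, f x = f y -> x = y.

Definition right_order (Q : quandle) (lt : Q -> Q -> Prop) : Prop :=
  (forall q, ~ lt q q) /\
  (forall a b c, lt a b -> lt b c -> lt a c) /\
  (forall a b, lt a b \/ a = b \/ lt b a) /\
  (forall q1 q2 q, lt q1 q2 -> lt (qop Q q1 q) (qop Q q2 q)).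

Record homeo_plus := HomeoPlus {
  hfun :> R -> R;
  hinv : R -> R;
  hfun_cont : continuity hfun;
  hinv_cont : continuity hinv;
  hinvK : forall x, hinv (hfun x) = x;
  hfunK : forall x, hfun (hinv x) = x;
  hfun_incr : forall x y, x < y -> hfun x < hfun y
}.

(* Main.v *)
Require Import Defs.
From Stdlib Require Import Reals Lra Lia List Classical ClassicalEpsilon FunctionalExtensionality Permutation.
Import ListNotations.
Open Scope R_scope.

Section TS.
Variable A : Type.

Definition lsum (v : A -> R) (l : list A) : R := fold_right (fun a s => v a + s) 0 l.

Lemma lsum_app v l1 l2 : lsum v (l1 ++ l2) = lsum v l1 + lsum v l2.
Proof. induction l1; simpl; [lra|rewrite IHl1; lra]. Qed.

Lemma lsum_plus u v l : lsum (fun a => u a + v a) l = lsum u l + lsum v l.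
Proof. induction l; simpl; [lra|rewrite IHl; lra]. Qed.

Lemma lsum_le_in u v l : (forall a, In a l -> u a <= v a) -> lsum u l <= lsum v l.
Proof. induction l; simpl; intros H; [lra|]. 
  assert (u a <= v a) by (apply H; auto).
  assert (lsum u l <= lsum v l) by (apply IHl; intros; apply H; auto). lra. Qed.

Lemma lsum_nonneg v l : (forall a, 0 <= v a) -> 0 <= lsum v l.
Proof. intros H; induction l; simpl; [lra|]. specialize (H a); lra. Qed.

Lemma lsum_zero_in v l : (forall a, In a l -> v a = 0) -> lsum v l = 0.
Proof. induction l; simpl; intros H; [lra|]. rewrite H, IHl; auto; lra. Qed.

Lemma lsum_perm v l l' : Permutation l l' -> lsum v l = lsum v l'.
Proof. induction 1; simpl; lra. Qed.

Lemma lsum_incl v l l' : (forall a, 0 <= v a) -> NoDup l -> incl l l' -> lsum v l <= lsum v l'.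
Proof.
  intros Hv. revert l. induction l' as [|a l' IH]; intros l Hnd Hi.
  - destruct l as [|b l]; [simpl; lra|]. exfalso. apply (Hi b). simpl; auto.
  - destruct (classic (In a l)) as [Ha|Ha].
    + destruct (in_split _ _ Ha) as [l1 [l2 E]]. subst l.
      rewrite (lsum_perm v _ (a :: l1 ++ l2)) by (symmetry; apply Permutation_middle).
      simpl. apply NoDup_remove in Hnd. destruct Hnd as [Hnd Hn].
      assert (lsum v (l1 ++ l2) <= lsum v l'); [|lra].
      apply IH; auto. intros x Hx. destruct (Hi x) as [E|E]; auto.
      { apply in_app_or in Hx. apply in_or_app. destruct Hx; simpl; auto. }
      subst x. contradiction.
    + simpl. assert (lsum v l <= lsum v l'); [|specialize (Hv a); lra].
      apply IH; auto. intros x Hx. destruct (Hi x Hx) as [E|E]; auto. subst; contradiction.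
Qed.

Lemma nodup_exists (l : list A) : exists l', NoDup l' /\ forall x, In x l <-> In x l'.
Proof.
  induction l as [|a l [l' [H1 H2]]].
  - exists []. split; [constructor|]. tauto.
  - destruct (classic (In a l')).
    + exists l'. split; auto. intros x; simpl. rewrite H2. split; [intros [E|E]; subst; auto|auto].
    + exists (a :: l'). split; [constructor; auto|]. intros x; simpl. rewrite H2. tauto.
Qed.

Definition fsums v := fun y => exists l, NoDup l /\ y = lsum v l.
Definition bnd v := exists B, forall l, NoDup l -> lsum v l <= B.

Lemma fsums_ne v : exists y, fsums v y.
Proof. exists 0. exists []. split; [constructor|reflexivity]. Qed.

Lemma bnd_bound v : bnd v -> bound (fsums v).
Proof. intros [B HB]. exists B. intros y [l [Hl ->]]. auto. Qed.

Definition tsum v : R :=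
  match excluded_middle_informative (bnd v) with
  | left H => proj1_sig (completeness _ (bnd_bound v H) (fsums_ne v))
  | right _ => 0 end.

Lemma tsum_lub v : bnd v -> is_lub (fsums v) (tsum v).
Proof. intros H. unfold tsum. destruct (excluded_middle_informative _); [|contradiction].
  exact (proj2_sig _). Qed.

Lemma tsum_ge v l : bnd v -> NoDup l -> lsum v l <= tsum v.
Proof. intros H Hl. apply (proj1 (tsum_lub v H)). exists l; auto. Qed.

Lemma tsum_le v B : (forall l, NoDup l -> lsum v l <= B) -> tsum v <= B.
Proof. intros H. assert (Hb : bnd v) by (exists B; auto).
  apply (proj2 (tsum_lub v Hb)). intros y [l [Hl ->]]. auto. Qed.

Lemma tsum_approx v eps : bnd v -> 0 < eps -> exists l, NoDup l /\ tsum v - eps < lsum v l.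
Proof.
  intros H He. apply NNPP. intros Hn.
  assert (tsum v <= tsum v - eps); [|lra].
  apply (proj2 (tsum_lub v H)). intros y [l [Hl ->]].
  apply Rnot_lt_le. intros Hlt. apply Hn. exists l; auto.
Qed.

Lemma tsum_nonneg v : bnd v -> 0 <= tsum v.
Proof. intros H. apply (tsum_ge v [] H). constructor. Qed.

Lemma bnd_le u v : (forall a, 0 <= v a <= u a) -> bnd u -> bnd v.
Proof. intros H [B HB]. exists B. intros l Hl. 
  apply Rle_trans with (lsum u l); auto. apply lsum_le_in. intros; apply H. Qed.

Lemma tsum_mono u v : (forall a, 0 <= v a <= u a) -> bnd u -> tsum v <= tsum u.
Proof. intros H Hb. apply tsum_le. intros l Hl.
  apply Rle_trans with (lsum u l); [|apply tsum_ge; auto]. apply lsum_le_in; intros; apply H. Qed.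

Lemma bnd_plus u v : bnd u -> bnd v -> bnd (fun a => u a + v a).
Proof. intros [B1 H1] [B2 H2]. exists (B1 + B2). intros l Hl. rewrite lsum_plus.
  specialize (H1 l Hl); specialize (H2 l Hl); lra. Qed.

Lemma tsum_plus u v : (forall a, 0 <= u a) -> (forall a, 0 <= v a) -> bnd u -> bnd v ->
  tsum (fun a => u a + v a) = tsum u + tsum v.
Proof.
  intros Hu Hv Bu Bv. apply Rle_antisym.
  - apply tsum_le. intros l Hl. rewrite lsum_plus.
    pose proof (tsum_ge u l Bu Hl); pose proof (tsum_ge v l Bv Hl); lra.
  - assert (tsum u <= tsum (fun a => u a + v a) - tsum v); [|lra].
    apply tsum_le. intros l1 Hl1.
    assert (tsum v <= tsum (fun a => u a + v a) - lsum u l1); [|lra].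
    apply tsum_le. intros l2 Hl2.
    destruct (nodup_exists (l1 ++ l2)) as [L [HL HLi]].
    assert (lsum u l1 <= lsum u L).
    { apply lsum_incl; auto. intros x Hx. apply HLi. apply in_or_app; auto. }
    assert (lsum v l2 <= lsum v L).
    { apply lsum_incl; auto. intros x Hx. apply HLi. apply in_or_app; auto. }
    pose proof (tsum_ge _ L (bnd_plus u v Bu Bv) HL). rewrite lsum_plus in H1. lra.
Qed.

Lemma tsum_zero : tsum (fun _ => 0) = 0.
Proof. apply Rle_antisym. apply tsum_le. intros l _. rewrite lsum_zero_in; auto; lra.
  apply tsum_nonneg. exists 0. intros l _. rewrite lsum_zero_in; auto; lra. Qed.

Definition pt (p : A) (c : R) : A -> R :=
  fun q => if excluded_middle_informative (q = p) then c else 0.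

Lemma pt_nonneg p c : 0 <= c -> forall a, 0 <= pt p c a.
Proof. intros H a. unfold pt. destruct (excluded_middle_informative _); lra. Qed.

Lemma lsum_pt_notin p c l : ~ In p l -> lsum (pt p c) l = 0.
Proof. intros H. apply lsum_zero_in. intros a Ha. unfold pt.
  destruct (excluded_middle_informative _); auto. subst; contradiction. Qed.

Lemma lsum_pt p c l : NoDup l -> 0 <= c -> lsum (pt p c) l <= c.
Proof. induction 1; intros Hc; simpl; [lra|].
  unfold pt at 1. destruct (excluded_middle_informative _).
  - subst. rewrite lsum_pt_notin; auto; lra.
  - specialize (IHNoDup Hc); lra. Qed.

Lemma tsum_pt p c : 0 <= c -> tsum (pt p c) = c.
Proof. intros Hc. apply Rle_antisym.
  - apply tsum_le. intros; apply lsum_pt; auto.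
  - assert (Hb : bnd (pt p c)) by (exists c; intros; apply lsum_pt; auto).
    pose proof (tsum_ge _ [p] Hb). simpl in H. unfold pt at 1 in H.
    destruct (excluded_middle_informative (p = p)) as [_|n]; [|contradiction].
    assert (NoDup [p]) by (constructor; [simpl; auto|constructor]). specialize (H H0). lra. Qed.

Lemma bnd_pt p c : 0 <= c -> bnd (pt p c).
Proof. intros Hc. exists c; intros; apply lsum_pt; auto. Qed.

Lemma tsum_reindex v g gi : (forall a, g (gi a) = a) -> (forall a, gi (g a) = a) ->
  bnd v -> bnd (fun a => v (g a)) /\ tsum (fun a => v (g a)) = tsum v.
Proof.
  intros H1 H2 Hb.
  assert (Hl : forall (f fi : A -> A) (u : A -> R) l, (forall a, fi (f a) = a) -> NoDup l ->
            lsum (fun a => u (f a)) l = lsum u (map f l) /\ NoDup (map f l)).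
  { intros f fi u l Hf Hl. split.
    - induction l; simpl; auto. rewrite IHl; auto. inversion Hl; auto.
    - apply FinFun.Injective_map_NoDup; auto. intros x y E.
      rewrite <- (Hf x), <- (Hf y), E; auto. }
  assert (Hb' : bnd (fun a => v (g a))).
  { destruct Hb as [B HB]. exists B. intros l Hnd. destruct (Hl g gi v l H2 Hnd) as [-> ?]. auto. }
  split; auto. apply Rle_antisym.
  - apply tsum_le. intros l Hnd. destruct (Hl g gi v l H2 Hnd) as [-> ?]. apply tsum_ge; auto.
  - apply tsum_le. intros l Hnd. destruct (Hl gi g (fun a => v (g a)) l H1 Hnd) as [E ?].
    replace (lsum v l) with (lsum (fun a => v (g (gi a))) l).
    + rewrite E. apply tsum_ge; auto.
    + apply f_equal2; auto. apply functional_extensionality; intros; rewrite H1; auto.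
Qed.

Definition ind (P : A -> Prop) (v : A -> R) : A -> R :=
  fun q => if excluded_middle_informative (P q) then v q else 0.

Lemma ind_bounds P v : (forall a, 0 <= v a) -> forall a, 0 <= ind P v a <= v a.
Proof. intros H a. unfold ind. destruct (excluded_middle_informative _); specialize (H a); lra. Qed.

Lemma ind_T P v a : P a -> ind P v a = v a.
Proof. unfold ind; destruct (excluded_middle_informative _); tauto. Qed.
Lemma ind_F P v a : ~ P a -> ind P v a = 0.
Proof. unfold ind; destruct (excluded_middle_informative _); tauto. Qed.
Lemma pt_T p c : pt p c p = c.
Proof. unfold pt; destruct (excluded_middle_informative _); tauto. Qed.
Lemma pt_F p c a : a <> p -> pt p c a = 0.
Proof. unfold pt; destruct (excluded_middle_informative _); tauto. Qed.

End TS.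
Arguments lsum {A}. Arguments tsum {A}. Arguments bnd {A}. Arguments pt {A}. Arguments ind {A}.
Lemma geom_seq k M : lsum (fun n => (/2)^n) (seq k M) = 2 * ((/2)^k - (/2)^(k+M)).
Proof.
  revert k; induction M; intros k; simpl.
  - rewrite Nat.add_0_r. lra.
  - rewrite IHM. replace (k + S M)%nat with (S k + M)%nat by lia. simpl. lra.
Qed.

Lemma nat_list_bound (l : list nat) : exists M, forall n, In n l -> (n < M)%nat.
Proof. induction l as [|a l [M HM]]. exists 0%nat; simpl; tauto.
  exists (S (Nat.max a M)). intros n [E|E]; [subst; lia|]. specialize (HM n E); lia. Qed.

Lemma geom_bound (l : list nat) : NoDup l -> lsum (fun n => (/2)^n) l <= 2.
Proof.
  intros Hl. destruct (nat_list_bound l) as [M HM].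
  apply Rle_trans with (lsum (fun n => (/2)^n) (seq 0 M)).
  - apply lsum_incl; auto. intros; left; apply pow_lt; lra.
    intros x Hx. apply in_seq. specialize (HM x Hx). lia.
  - rewrite geom_seq. simpl. assert (0 < (/2)^M) by (apply pow_lt; lra). lra.
Qed.
Section QS.
Variable Q : Type.
Variable lt : Q -> Q -> Prop.
Hypothesis lt_irr : forall q, ~ lt q q.
Hypothesis lt_trans : forall a b c, lt a b -> lt b c -> lt a c.
Hypothesis lt_tri : forall a b, lt a b \/ a = b \/ lt b a.
Variable e : Q -> nat.
Hypothesis e_inj : forall x y, e x = e y -> x = y.

Definition w q := (/2)^(e q).
Lemma w_pos q : 0 < w q.
Proof. apply pow_lt; lra. Qed.
Lemma w_nn q : 0 <= w q.
Proof. left; apply w_pos. Qed.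

Lemma bnd_w : bnd w.
Proof. exists 2. intros l Hl.
  assert (E : lsum w l = lsum (fun n => (/2)^n) (map e l)).
  { induction l; simpl; auto. rewrite IHl; auto. inversion Hl; auto. }
  rewrite E. apply geom_bound. apply FinFun.Injective_map_NoDup; auto. Qed.

Definition aut (g gi : Q -> Q) :=
  (forall q, g (gi q) = q) /\ (forall q, gi (g q) = q) /\ (forall p q, lt p q -> lt (g p) (g q)).

Lemma aut_inv g gi : aut g gi -> aut gi g.
Proof. intros [H1 [H2 H3]]. split; [auto|split; [auto|]].
  intros p q Hpq. destruct (lt_tri (gi p) (gi q)) as [H|[H|H]]; auto.
  - apply (f_equal g) in H. rewrite !H1 in H. subst. exfalso; eapply lt_irr; eauto.
  - apply H3 in H. rewrite !H1 in H. exfalso. apply (lt_irr p). eauto. Qed.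

Lemma aut_refl g gi p q : aut g gi -> lt (g p) (g q) -> lt p q.
Proof. intros Ha H. destruct (aut_inv _ _ Ha) as [H1 [H2 H3]]. apply H3 in H. rewrite !H1 in H. auto. Qed.

Lemma aut_comp g gi h hi : aut g gi -> aut h hi -> aut (fun q => g (h q)) (fun q => hi (gi q)).
Proof. intros [G1 [G2 G3]] [H1 [H2 H3]]. split; [|split]; intros; simpl.
  rewrite H1, G1; auto. rewrite G2, H2; auto. auto. Qed.

Lemma aut_id : aut (fun q => q) (fun q => q).
Proof. split; [|split]; auto. Qed.

Lemma wg_props g gi : aut g gi -> bnd (fun q => w (g q)) /\ tsum (fun q => w (g q)) = tsum w.
Proof. intros [H1 [H2 _]]. apply tsum_reindex with gi; auto. apply bnd_w. Qed.

Lemma bnd_under (u v : Q -> R) : bnd u -> (forall a, 0 <= v a <= u a) -> bnd v.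
Proof. intros; eapply bnd_le; eauto. Qed.

Definition Stot := tsum w.
Definition a q := tsum (ind (fun p => lt p q) w).
Definition le q p := lt q p \/ q = p.

Lemma bnd_ind P : bnd (ind P w).
Proof. apply bnd_under with w. apply bnd_w. apply ind_bounds, w_nn. Qed.

Lemma a_nn q : 0 <= a q.
Proof. apply tsum_nonneg, bnd_ind. Qed.

Lemma Stot_nn : 0 <= Stot.
Proof. apply tsum_nonneg, bnd_w. Qed.

Lemma a_le_split q : tsum (ind (fun p => le p q) w) = a q + w q.
Proof.
  rewrite <- (tsum_pt Q q (w q)) by apply w_nn. unfold a. rewrite <- tsum_plus.
  - f_equal. apply functional_extensionality. intros r. unfold le.
    destruct (lt_tri r q) as [H|[H|H]].
    + rewrite !ind_T by auto. rewrite pt_F. lra. intros ->. eapply lt_irr; eauto.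
    + subst. rewrite ind_T by auto. rewrite ind_F by apply lt_irr. rewrite pt_T. lra.
    + rewrite !ind_F. rewrite pt_F. lra. intros ->; eapply lt_irr; eauto.
      intro; eapply lt_irr; eauto. intros [H'|H']. eapply lt_irr; eauto. subst; eapply lt_irr; eauto.
  - apply ind_bounds, w_nn.
  - apply pt_nonneg, w_nn.
  - apply bnd_ind.
  - apply bnd_pt, w_nn.
Qed.

Lemma a_step p q : lt p q -> a p + w p <= a q.
Proof. intros Hpq. rewrite <- a_le_split. apply tsum_mono.
  - intros r. pose proof (ind_bounds Q (fun r => lt r q) w w_nn r) as Hb. unfold le.
    destruct (classic (lt r p \/ r = p)) as [H|H].
    + rewrite ind_T by auto. rewrite ind_T. lra. destruct H as [H| ->]; eauto.
    + rewrite ind_F by auto. lra.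
  - apply bnd_ind. Qed.

Lemma a_top p : a p + w p <= Stot.
Proof. rewrite <- a_le_split. apply tsum_mono. apply ind_bounds, w_nn. apply bnd_w. Qed.

Lemma a_lt p q : lt p q -> a p < a q.
Proof. intros H. pose proof (a_step p q H). pose proof (w_pos p). lra. Qed.

Lemma a_inj p q : a p = a q -> p = q.
Proof. intros E. destruct (lt_tri p q) as [H|[H|H]]; auto; apply a_lt in H; lra. Qed.

Lemma a_reindex g gi q : aut g gi -> a (g q) = tsum (ind (fun r => lt r q) (fun r => w (g r))).
Proof. intros Ha. destruct Ha as [H1 [H2 H3]] eqn:Eq. unfold a.
  destruct (tsum_reindex Q (ind (fun p => lt p (g q)) w) g gi H1 H2 (bnd_ind _)) as [_ E].
  rewrite <- E. f_equal. apply functional_extensionality. intros r. unfold ind.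
  destruct (excluded_middle_informative (lt (g r) (g q))) as [X|X];
  destruct (excluded_middle_informative (lt r q)) as [Y|Y]; auto.
  - exfalso. apply Y. eapply aut_refl; eauto.
  - exfalso; apply X; auto. Qed.

Definition phi q x := Rmax 0 (Rmin 1 ((x - a q) / w q)).

Lemma phi_one q x : a q + w q <= x -> phi q x = 1.
Proof. intros H. unfold phi. pose proof (w_pos q).
  assert (1 <= (x - a q) / w q).
  { apply Rmult_le_reg_r with (w q); auto. field_simplify; lra. }
  rewrite Rmin_left by lra. rewrite Rmax_right; lra. Qed.

Lemma phi_zero q x : x <= a q -> phi q x = 0.
Proof. intros H. unfold phi. pose proof (w_pos q).
  assert ((x - a q) / w q <= 0).
  { apply Rmult_le_reg_r with (w q); auto. field_simplify; lra. }
  rewrite Rmin_right by lra. rewrite Rmax_left; lra. Qed.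

Lemma phi_mid q x : a q <= x <= a q + w q -> phi q x = (x - a q) / w q.
Proof. intros H. unfold phi. pose proof (w_pos q).
  assert ((x - a q) / w q <= 1).
  { apply Rmult_le_reg_r with (w q); auto. field_simplify; lra. }
  assert (0 <= (x - a q) / w q).
  { apply Rmult_le_reg_r with (w q); auto. field_simplify; lra. }
  rewrite Rmin_right by lra. rewrite Rmax_right; lra. Qed.

Lemma phi_bounds q x : 0 <= phi q x <= 1.
Proof. unfold phi. split. apply Rmax_l. apply Rmax_lub. lra. apply Rmin_l. Qed.

Lemma phi_mono q x y : x <= y -> phi q x <= phi q y.
Proof. intros H. unfold phi. pose proof (w_pos q).
  assert ((x - a q) / w q <= (y - a q) / w q).
  { unfold Rdiv. apply Rmult_le_compat_r. left; apply Rinv_0_lt_compat; auto. lra. }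
  apply Rle_max_compat_l. apply Rle_min_compat_l. auto. Qed.

Definition T (g : Q -> Q) x := tsum (fun q => w (g q) * phi q x).
Definition H (g : Q -> Q) x := T g x + Rmin x 0 + Rmax (x - Stot) 0.

Lemma bnd_T g gi x : aut g gi -> bnd (fun q => w (g q) * phi q x).
Proof. intros Ha. apply bnd_under with (fun q => w (g q)). apply (wg_props g gi Ha).
  intros q. pose proof (phi_bounds q x). pose proof (w_pos (g q)). nra. Qed.

Lemma T_mono g gi x y : aut g gi -> x <= y -> T g x <= T g y.
Proof. intros Ha Hxy. apply tsum_mono; [|eapply bnd_T; eauto].
  intros q. pose proof (phi_bounds q x). pose proof (phi_mono q x y Hxy). pose proof (w_pos (g q)). nra. Qed.

Lemma H_mono g gi x y : aut g gi -> x <= y -> H g x <= H g y.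
Proof. intros Ha Hxy. unfold H. pose proof (T_mono g gi x y Ha Hxy).
  assert (Rmin x 0 <= Rmin y 0) by (apply Rle_min_compat_r; auto).
  assert (Rmax (x - Stot) 0 <= Rmax (y - Stot) 0) by (apply Rle_max_compat_r; lra). lra. Qed.

Lemma T_interval g gi p x : aut g gi -> a p <= x <= a p + w p ->
  T g x = a (g p) + (x - a p) / w p * w (g p).
Proof.
  intros Ha Hx. pose proof (w_pos p). pose proof (w_pos (g p)).
  set (s := (x - a p) / w p).
  assert (Hs : 0 <= s <= 1).
  { unfold s; rewrite <- (phi_mid p x Hx). apply phi_bounds. }
  rewrite (a_reindex g gi p Ha).
  rewrite <- (tsum_pt Q p (s * w (g p))) by nra.
  destruct (wg_props g gi Ha) as [Bg _].
  rewrite <- tsum_plus.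
  - unfold T. f_equal. apply functional_extensionality. intros q.
    destruct (lt_tri q p) as [Hq|[Hq|Hq]].
    + rewrite ind_T by auto. rewrite pt_F by (intros ->; eapply lt_irr; eauto).
      rewrite phi_one. lra. pose proof (a_step q p Hq). lra.
    + subst q. rewrite ind_F by apply lt_irr. rewrite pt_T. rewrite phi_mid by auto. unfold s. lra.
    + rewrite ind_F by (intro; apply (lt_irr q); eauto).
      rewrite pt_F by (intros ->; eapply lt_irr; eauto).
      rewrite phi_zero. lra. pose proof (a_step p q Hq). lra.
  - apply ind_bounds. intros; apply w_nn.
  - apply pt_nonneg; nra.
  - apply bnd_under with (fun q => w (g q)); auto. apply ind_bounds; intros; apply w_nn.
  - apply bnd_pt; nra.
Qed.

Lemma H_interval g gi p x : aut g gi -> a p <= x <= a p + w p ->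
  H g x = a (g p) + (x - a p) / w p * w (g p).
Proof. intros Ha Hx. unfold H. rewrite (T_interval g gi p x Ha Hx).
  pose proof (a_nn p). pose proof (a_top p).
  rewrite Rmin_right by lra. rewrite Rmax_right by lra. lra. Qed.

Lemma H_at_a g gi p : aut g gi -> H g (a p) = a (g p).
Proof. intros Ha. pose proof (w_pos p). rewrite (H_interval g gi p); auto; [|lra].
  unfold Rdiv. replace (a p - a p) with 0 by lra. lra. Qed.

Lemma H_at_aw g gi p : aut g gi -> H g (a p + w p) = a (g p) + w (g p).
Proof. intros Ha. pose proof (w_pos p). rewrite (H_interval g gi p); auto; [|lra].
  field. lra. Qed.

Lemma H_low g gi x : aut g gi -> x <= 0 -> H g x = x.
Proof. intros Ha Hx. unfold H, T.
  replace (fun q => w (g q) * phi q x) with (fun _ : Q => 0).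
  - rewrite tsum_zero. rewrite Rmin_left by lra. pose proof Stot_nn. rewrite Rmax_right by lra. lra.
  - apply functional_extensionality. intros q. rewrite phi_zero. lra. pose proof (a_nn q). lra.
Qed.

Lemma H_high g gi x : aut g gi -> Stot <= x -> H g x = x.
Proof. intros Ha Hx. unfold H, T. pose proof Stot_nn.
  replace (fun q => w (g q) * phi q x) with (fun q => w (g q)).
  - rewrite (proj2 (wg_props g gi Ha)). fold Stot. rewrite Rmin_right by lra. rewrite Rmax_left by lra. lra.
  - apply functional_extensionality. intros q. rewrite phi_one. lra. pose proof (a_top q). lra.
Qed.

Lemma H_mid g gi x : aut g gi -> 0 <= x <= Stot -> H g x = T g x /\ 0 <= H g x <= Stot.
Proof. intros Ha Hx. split.
  - unfold H. rewrite Rmin_right by lra. rewrite Rmax_right by lra. lra.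
  - pose proof (H_mono g gi 0 x Ha (proj1 Hx)). pose proof (H_mono g gi x Stot Ha (proj2 Hx)).
    rewrite (H_low g gi 0 Ha) in H0 by lra. rewrite (H_high g gi Stot Ha) in H1 by lra. lra.
Qed.

Lemma phi_H h hi p x : aut h hi -> phi (h p) (H h x) = phi p x.
Proof.
  intros Ha. pose proof (w_pos p).
  destruct (Rle_lt_dec x (a p)) as [H1|H1].
  - rewrite (phi_zero p x H1). apply phi_zero. rewrite <- (H_at_a h hi p Ha). apply (H_mono h hi); auto.
  - destruct (Rle_lt_dec (a p + w p) x) as [H2|H2].
    + rewrite (phi_one p x H2). apply phi_one. rewrite <- (H_at_aw h hi p Ha). apply (H_mono h hi); auto.
    + rewrite (H_interval h hi p x Ha) by lra. 
      pose proof (phi_bounds p x) as Hs. rewrite (phi_mid p x) in Hs |- * by lra.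
      pose proof (w_pos (h p)). rewrite phi_mid. field. lra. nra.
Qed.

Lemma H_comp g gi h hi x : aut g gi -> aut h hi -> H g (H h x) = H (fun q => g (h q)) x.
Proof.
  intros Hg Hh. pose proof (aut_comp g gi h hi Hg Hh) as Hgh.
  destruct (Rle_lt_dec x 0) as [H1|H1].
  { rewrite (H_low h hi x), (H_low g gi x), (H_low _ _ x Hgh); auto. }
  destruct (Rle_lt_dec Stot x) as [H2|H2].
  { rewrite (H_high h hi x), (H_high g gi x), (H_high _ _ x Hgh); auto. }
  destruct (H_mid h hi x Hh ltac:(lra)) as [E1 B1].
  rewrite (proj1 (H_mid g gi _ Hg B1)). rewrite (proj1 (H_mid _ _ x Hgh ltac:(lra))).
  unfold T. destruct Hh as [X1 [X2 X3]] eqn:EE.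
  destruct (tsum_reindex Q (fun q => w (g q) * phi q (H h x)) h hi X1 X2 (bnd_T g gi _ Hg)) as [_ E].
  rewrite <- E. f_equal. apply functional_extensionality. intros p.
  rewrite (phi_H h hi p x Hh). auto.
Qed.

Lemma list_max (Rl : Q -> Q -> Prop) (Rtr : forall a b c, Rl a b -> Rl b c -> Rl a c)
  (Rto : forall a b, Rl a b \/ a = b \/ Rl b a) (P : Q -> Prop) l :
  (exists q, In q l /\ P q) -> exists m, In m l /\ P m /\ forall q, In q l -> P q -> Rl q m \/ q = m.
Proof.
  induction l as [|b l IH]; intros [q [Hq Pq]]; [destruct Hq|].
  destruct (classic (exists q, In q l /\ P q)) as [Ex|NEx].
  - destruct (IH Ex) as [m [Hm [Pm Hmax]]].
    destruct (classic (P b)) as [Pb|Pb].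
    + destruct (Rto b m) as [X|[X|X]].
      * exists m. split; [right; auto|split; auto]. intros r [<-|Hr] Pr; auto.
      * exists m. split; [right; auto|split; auto]. intros r [<-|Hr] Pr; auto.
      * exists b. split; [left; auto|split; auto]. intros r [<-|Hr] Pr; auto.
        destruct (Hmax r Hr Pr) as [Y| ->]; eauto.
    + exists m. split; [right; auto|split; auto]. intros r [<-|Hr] Pr; [contradiction|auto].
  - destruct Hq as [<-|Hq]; [|exfalso; apply NEx; eauto].
    exists b. split; [left; auto|split; auto]. intros r [<-|Hr] Pr; auto.
    exfalso; apply NEx; eauto.
Qed.

Lemma le_eps x y : (forall eps, 0 < eps -> x <= y + eps) -> x <= y.
Proof. intros Hh. destruct (Rle_lt_dec x y); auto. specialize (Hh ((x - y)/2)). lra. Qed.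

Lemma H_id x : H (fun q => q) x = x.
Proof.
  destruct (Rle_lt_dec x 0) as [H1|H1]. { apply (H_low _ _ x aut_id H1). }
  destruct (Rle_lt_dec Stot x) as [H2|H2]. { apply (H_high _ _ x aut_id H2). }
  rewrite (proj1 (H_mid _ _ x aut_id ltac:(lra))).
  destruct (classic (exists c, a c <= x <= a c + w c)) as [[c Hc]|NA].
  { rewrite (T_interval _ _ c x aut_id Hc). pose proof (w_pos c). field. lra. }
  set (D := fun q => a q + w q <= x).
  assert (Hdich : forall q, D q \/ x < a q).
  { intros q. unfold D. destruct (Rle_lt_dec (a q + w q) x); auto.
    destruct (Rle_lt_dec (a q) x); auto. exfalso; apply NA; exists q; lra. }
  assert (Hdown : forall r q, lt r q -> D q -> D r).
  { unfold D; intros r q Hrq Hq. pose proof (a_step r q Hrq). pose proof (w_pos q). lra. }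
  assert (ET : T (fun q => q) x = tsum (ind D w)).
  { unfold T. f_equal. apply functional_extensionality. intros q.
    destruct (Hdich q) as [Hq|Hq].
    - rewrite ind_T by auto. rewrite phi_one by auto. lra.
    - rewrite ind_F. rewrite phi_zero by lra. lra. unfold D; pose proof (w_pos q); lra. }
  rewrite ET. apply Rle_antisym.
  -
    apply tsum_le. intros l Hl.
    destruct (classic (exists q, In q l /\ D q)) as [Ex|NEx].
    + destruct (list_max lt lt_trans lt_tri D l Ex) as [m [Hm [Dm Hmax]]].
      apply Rle_trans with (lsum (ind (fun p => le p m) w) l).
      * apply lsum_le_in. intros q Hq. destruct (classic (D q)) as [Dq|Dq].
        -- rewrite !ind_T; auto. lra. apply Hmax; auto.
        -- rewrite ind_F by auto. apply ind_bounds, w_nn.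
      * apply Rle_trans with (tsum (ind (fun p => le p m) w)).
        apply tsum_ge; auto; apply bnd_ind. rewrite a_le_split. apply Dm.
    + rewrite lsum_zero_in. lra. intros q Hq. apply ind_F. intros Dq; apply NEx; eauto.
  -
    set (C := fun q => ~ D q).
    assert (Hsplit : Stot = tsum (ind D w) + tsum (ind C w)).
    { unfold Stot. rewrite <- tsum_plus; try apply bnd_ind; try (apply ind_bounds, w_nn).
      f_equal. apply functional_extensionality. intros q. unfold C.
      destruct (classic (D q)). rewrite ind_T, ind_F by auto; lra. rewrite ind_F, ind_T by auto; lra. }
    apply le_eps. intros eps Heps.
    destruct (tsum_approx Q (ind C w) eps (bnd_ind C) Heps) as [l [Hl Happ]].
    destruct (classic (exists q, In q l /\ C q)) as [Ex|NEx].
    + destruct (list_max (fun u v => lt v u) (fun a b c X Y => lt_trans c b a Y X)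
                 (fun u v => match lt_tri v u with or_introl X => or_introl X
                           | or_intror (or_introl X) => or_intror (or_introl (eq_sym X))
                           | or_intror (or_intror X) => or_intror (or_intror X) end) C l Ex)
        as [m [Hm [Cm Hmin]]].
      assert (Hxm : x < a m).
      { destruct (Hdich m); [contradiction|auto]. }
      assert (Ham : a m = tsum (ind D w) + tsum (ind (fun r => C r /\ lt r m) w)).
      { unfold a. rewrite <- tsum_plus; try apply bnd_ind; try (apply ind_bounds, w_nn).
        f_equal. apply functional_extensionality. intros r.
        assert (DL : D r -> lt r m).
        { intros Dr. destruct (lt_tri r m) as [X|[X|X]]; auto.
          subst; contradiction. exfalso; apply Cm; eauto. }
        destruct (classic (lt r m)) as [X|X].
        - destruct (classic (D r)) as [Y|Y].
          + rewrite !ind_T by auto. rewrite ind_F. lra. intros [Z _]; auto.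
          + rewrite ind_T by auto. rewrite ind_F by auto. rewrite ind_T. lra. split; auto.
        - rewrite !ind_F; try lra; auto. intros [_ Z]; auto. }
      assert (Hsmall : tsum (ind (fun r => C r /\ lt r m) w) <= eps).
      { apply tsum_le. intros l' Hl'.
        destruct (nodup_exists Q (l ++ l')) as [L [HL HLi]].
        assert (E1 : lsum (ind C w) l <= lsum (ind (fun r => C r /\ ~ lt r m) w) l).
        { apply lsum_le_in. intros r Hr. destruct (classic (C r)) as [Cr|Cr].
          - rewrite !ind_T; auto. lra. split; auto. intros Z.
            destruct (Hmin r Hr Cr) as [Y| ->]; eapply lt_irr; eauto.
          - rewrite ind_F by auto. apply ind_bounds, w_nn. }
        assert (E2 : lsum (ind (fun r => C r /\ ~ lt r m) w) l <= lsum (ind (fun r => C r /\ ~ lt r m) w) L).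
        { apply lsum_incl; auto. apply ind_bounds, w_nn. intros z Hz; apply HLi, in_or_app; auto. }
        assert (E3 : lsum (ind (fun r => C r /\ lt r m) w) l' <= lsum (ind (fun r => C r /\ lt r m) w) L).
        { apply lsum_incl; auto. apply ind_bounds, w_nn. intros z Hz; apply HLi, in_or_app; auto. }
        assert (E4 : lsum (ind (fun r => C r /\ lt r m) w) L + lsum (ind (fun r => C r /\ ~ lt r m) w) L
                     = lsum (ind C w) L).
        { rewrite <- lsum_plus. apply f_equal2; auto. apply functional_extensionality. intros r.
          destruct (classic (C r)) as [Cr|Cr].
          - destruct (classic (lt r m)).
            + rewrite ind_T, ind_F, ind_T by tauto. lra.
            + rewrite ind_F, !ind_T by tauto. lra.
          - rewrite !ind_F by tauto. lra. }
        pose proof (tsum_ge Q (ind C w) L (bnd_ind C) HL). lra. }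
      lra.
    + rewrite lsum_zero_in in Happ. lra. intros q Hq. apply ind_F. intros Cq; apply NEx; eauto.
Qed.

Lemma H_inv g gi x : aut g gi -> H gi (H g x) = x.
Proof. intros Ha. rewrite (H_comp gi g g gi x (aut_inv _ _ Ha) Ha).
  replace (fun q => gi (g q)) with (fun q : Q => q). apply H_id.
  apply functional_extensionality; intros q. destruct Ha as [_ [X _]]. auto. Qed.

Lemma H_incr g gi x y : aut g gi -> x < y -> H g x < H g y.
Proof. intros Ha Hxy. destruct (H_mono g gi x y Ha (Rlt_le _ _ Hxy)) as [X|X]; auto.
  apply (f_equal (H gi)) in X. rewrite !H_inv in X by auto. lra. Qed.

Lemma realization : exists F : (Q -> Q) -> R -> R,
 (forall g gi, aut g gi -> forall x y, x < y -> F g x < F g y) /\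
 (forall g gi, aut g gi -> forall x, F gi (F g x) = x) /\
 (forall g gi h hi, aut g gi -> aut h hi -> forall x, F g (F h x) = F (fun q => g (h q)) x) /\
 (forall g gi h hi, aut g gi -> aut h hi -> (forall x, F g x = F h x) -> forall q, g q = h q).
Proof.
  exists H. split; [|split; [|split]].
  - intros; eapply H_incr; eauto.
  - intros; eapply H_inv; eauto.
  - intros; eapply H_comp; eauto.
  - intros g gi h hi Hg Hh E q. apply a_inj. rewrite <- (H_at_a g gi q Hg), <- (H_at_a h hi q Hh). auto.
Qed.

End QS.

Lemma incr_cont (f fi : R -> R) : (forall x, fi (f x) = x) -> (forall x, f (fi x) = x) ->
  (forall x y, x < y -> f x < f y) -> (forall x y, x < y -> fi x < fi y) -> continuity f.
Proof.
  intros K1 K2 If Ifi x. unfold continuity_pt, continue_in, limit1_in, limit_in.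
  intros eps Heps. simpl. unfold R_dist.
  set (lo := fi (f x - eps)). set (hi := fi (f x + eps)).
  assert (lo < x). { unfold lo. rewrite <- (K1 x) at 2. apply Ifi. lra. }
  assert (x < hi). { unfold hi. rewrite <- (K1 x) at 1. apply Ifi. lra. }
  exists (Rmin (x - lo) (hi - x)). split. apply Rmin_glb_lt; lra.
  intros y [_ Hy]. 
  assert (Hm1 := Rmin_l (x - lo) (hi - x)). assert (Hm2 := Rmin_r (x - lo) (hi - x)).
  apply Rabs_def2 in Hy. destruct Hy as [Hy1 Hy2].
  assert (f lo < f y) by (apply If; lra). assert (f y < f hi) by (apply If; lra).
  unfold lo, hi in *. rewrite K2 in *. apply Rabs_def1; lra.
Qed.

Theorem lemma3p5 (Q : quandle) (lt : Q -> Q -> Prop) :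
  countable Q -> weak_latin Q -> right_order Q lt ->
  exists rho : Q -> homeo_plus,
    (forall r s : Q, (forall x, rho r x = rho s x) -> r = s) /\
    (forall (r s : Q) (x : R),
        rho (qop Q r s) x = rho s (rho r (hinv (rho s) x))).
Proof.
  intros [e He] Hwl [Hirr [Htr [Htot Hrm]]].
  destruct (realization Q lt Hirr Htr Htot e He) as [F [Fincr [Finv [Fcomp Finj]]]].
  set (Rs := fun s q => qop Q q s).
  assert (Hex : forall s q, exists p, qop Q p s = q).
  { intros s q. destruct (qrdiv Q s q) as [p [Hp _]]. eauto. }
  set (Rsi := fun s q => proj1_sig (constructive_indefinite_description _ (Hex s q))).
  assert (Haut : forall s, aut Q lt (Rs s) (Rsi s)).
  { intros s. split; [|split].
    - intros q. unfold Rs, Rsi. exact (proj2_sig (constructive_indefinite_description _ (Hex s q))).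
    - intros q. unfold Rs, Rsi.
      destruct (constructive_indefinite_description _ (Hex s (qop Q q s))) as [p Hp]. simpl.
      destruct (qrdiv Q s (qop Q q s)) as [p0 [_ U]]. rewrite <- (U p Hp), <- (U q eq_refl). auto.
    - intros p q Hpq. apply Hrm; auto. }
  assert (Hauti : forall s, aut Q lt (Rsi s) (Rs s)) by (intros; eapply aut_inv; eauto).
  exists (fun s => HomeoPlus (F (Rs s)) (F (Rsi s))
    (incr_cont _ _ (Finv _ _ (Haut s)) (Finv _ _ (Hauti s)) (Fincr _ _ (Haut s)) (Fincr _ _ (Hauti s)))
    (incr_cont _ _ (Finv _ _ (Hauti s)) (Finv _ _ (Haut s)) (Fincr _ _ (Hauti s)) (Fincr _ _ (Haut s)))
    (Finv _ _ (Haut s)) (Finv _ _ (Hauti s)) (Fincr _ _ (Haut s))).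
  split.
  - intros r s Hrs. simpl in Hrs.
    pose proof (Finj _ _ _ _ (Haut r) (Haut s) Hrs) as E.
    destruct (Hwl r s) as [qh Hq]. apply Hq. apply E.
  - intros r s x. simpl.
    assert (Hc : aut Q lt (fun q => Rs r (Rsi s q)) (fun q => Rs s (Rsi r q)))
      by (eapply aut_comp; eauto).
    rewrite (Fcomp _ _ _ _ (Haut r) (Hauti s)), (Fcomp _ _ _ _ (Haut s) Hc).
    f_equal. apply functional_extensionality. intros q. unfold Rs.
    rewrite qrdist. f_equal. symmetry. apply (proj1 (Haut s) q).
Qed.
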